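(* Let $\Lambda$ be a row-finite $k$-graph with no sources and let $\alpha$ be an action of $\mathbb{Z}^l$ on $\Lambda$ by automorphisms. Then $\Lambda$ is $\alpha$-aperiodic if and only if $\Lambda\times_\alpha\mathbb{Z}^l$ has no local periodicity.
   Context: A $k$-graph is a countable category $\Lambda$ with a functor $d:\Lambda\to\mathbb{N}^k$ with unique factorisation; vertices are degree-$0$ morphisms; row-finite: each $v\Lambda^n$ finite; no sources: each $v\Lambda^n$ nonempty. An automorphism is a bijective degree-preserving functor. $\Lambda\times_\alpha\mathbb{Z}^l$ is the $(k+l)$-graph with morphisms $\Lambda\times\mathbb{N}^l$, degree $(d(\lambda),m)$, $r(\lambda,m)=(r(\lambda),0)$, $s(\lambda,m)=(\alpha_{-m}(s(\lambda)),0)$, $(\mu,m)(\nu,n)=(\mu\alpha_m(\nu),m+n)$. For a $j$-graph $\Gamma$, $\Gamma^\infty$ is the set of degree-preserving functors $x:\Omega_j\to\Gamma$ ($\Omega_j=\{(a,b)\in\mathbb{N}^j\times\mathbb{N}^j:a\le b\}$, $r(a,b)=(a,a)$, $s(a,b)=(b,b)$, $d(a,b)=b-a$, composition $(a,b)(b,c)=(a,c)$), $v\Gamma^\infty=\{x:x(0,0)=v\}$, $\sigma^q(x)(0,n)=x(q,q+n)$. $\Gamma$ has no local periodicity if for every vertex $v$ and distinct $m,n\in\mathbb{N}^j$ there is $x\in v\Gamma^\infty$ with $\sigma^m(x)\ne\sigma^n(x)$. For an automorphism $\phi$ of $\Lambda$, $\phi^\infty(x)(0,n)=\phi(x(0,n))$.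 $\Lambda$ is $\alpha$-aperiodic if for each vertex $v$ and distinct $(p,m),(q,n)\in\mathbb{N}^k\times\mathbb{N}^l$ there is $x\in v\Lambda^\infty$ with $\sigma^p(\alpha^\infty_{-m}(x))\ne\sigma^q(\alpha^\infty_{-n}(x))$. *)

(* Defs.v *)
From HB Require Import structures.
From mathcomp Require Import all_boot all_order all_algebra.
Set Implicit Arguments. Unset Strict Implicit. Unset Printing Implicit Defensive.
Import GRing.Theory.

Notation nvec k := {ffun 'I_k -> nat}.
Notation zvec l := {ffun 'I_l -> int}.

Definition nzero k : nvec k := [ffun _ => 0%N].
Definition nadd k (m n : nvec k) : nvec k := [ffun i => (m i + n i)%N].
Definition nsub k (m n : nvec k) : nvec k := [ffun i => (m i - n i)%N].
Definition nle k (m n : nvec k) : bool := [forall i, m i <= n i].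
Definition zzero l : zvec l := [ffun _ => 0%R].
Definition zadd l (m n : zvec l) : zvec l := [ffun i => (m i + n i)%R].
Definition zneg l (m : zvec l) : zvec l := [ffun i => (- m i)%R].
Definition zofn l (m : nvec l) : zvec l := [ffun i => Posz (m i)].
Definition ncat k l (m : nvec k) (n : nvec l) : nvec (k + l) :=
  [ffun i => match split i with inl a => m a | inr b => n b end].

(* Raw data of a countable category with a degree map to N^k.
   Objects = vertices; composition is total but only meaningful
   on composable pairs (dom f = cod g); comp f g = "f g". *)
Record rawgraph (k : nat) := RawGraph {
  Ob : countType;
  Mor : countType;
  idm : Ob -> Mor;
  dom : Mor -> Ob;
  cod : Mor -> Ob;
  comp : Mor -> Mor -> Mor;
  deg : Mor -> nvec k
}.
Arguments idm {k} _ _.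
Arguments dom {k} _ _.
Arguments cod {k} _ _.
Arguments comp {k} _ _ _.
Arguments deg {k} _ _.

Definition is_category k (G : rawgraph k) : Prop :=
  (forall v, dom G (idm G v) = v /\ cod G (idm G v) = v)
  /\ (forall f, comp G (idm G (cod G f)) f = f /\ comp G f (idm G (dom G f)) = f)
  /\ (forall f g, dom G f = cod G g ->
        dom G (comp G f g) = dom G g /\ cod G (comp G f g) = cod G f)
  /\ (forall f g h, dom G f = cod G g -> dom G g = cod G h ->
        comp G (comp G f g) h = comp G f (comp G g h)).

Definition is_degree_functor k (G : rawgraph k) : Prop :=
  (forall v, deg G (idm G v) = nzero k)
  /\ (forall f g, dom G f = cod G g ->
        deg G (comp G f g) = nadd (deg G f) (deg G g)).

Definition unique_factorisation k (G : rawgraph k) : Prop :=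
  forall (f : Mor G) (m n : nvec k), deg G f = nadd m n ->
    exists! p : (Mor G * Mor G)%type,
      [/\ dom G p.1 = cod G p.2, deg G p.1 = m, deg G p.2 = n
        & f = comp G p.1 p.2].

Definition is_kgraph k (G : rawgraph k) : Prop :=
  [/\ is_category G, is_degree_functor G & unique_factorisation G].

Definition row_finite k (G : rawgraph k) : Prop :=
  forall (v : Ob G) (n : nvec k), exists s : seq (Mor G),
    forall f, cod G f = v -> deg G f = n -> f \in s.

Definition no_sources k (G : rawgraph k) : Prop :=
  forall (v : Ob G) (n : nvec k), exists f, cod G f = v /\ deg G f = n.

Definition is_automorphism k (G : rawgraph k) (fo : Ob G -> Ob G)
    (fm : Mor G -> Mor G) : Prop :=
  [/\ bijective fo, bijective fm,
      (forall f, [/\ dom G (fm f) = fo (dom G f), cod G (fm f) = fo (cod G f)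
                   & deg G (fm f) = deg G f]),
      (forall v, fm (idm G v) = idm G (fo v))
    & (forall f g, dom G f = cod G g -> fm (comp G f g) = comp G (fm f) (fm g))].

Definition is_Zaction k l (G : rawgraph k) (ao : zvec l -> Ob G -> Ob G)
    (am : zvec l -> Mor G -> Mor G) : Prop :=
  [/\ (forall g, is_automorphism (ao g) (am g)),
      (forall v, ao (zzero l) v = v), (forall f, am (zzero l) f = f),
      (forall g h v, ao (zadd g h) v = ao g (ao h v))
    & (forall g h f, am (zadd g h) f = am g (am h f))].

(* skew_product product Lambda x_alpha Z^l, a (k+l)-graph; vertex (v,0) is v *)
Definition skew_product k l (G : rawgraph k) (ao : zvec l -> Ob G -> Ob G)
    (am : zvec l -> Mor G -> Mor G) : rawgraph (k + l) :=
  {| Ob := Ob G;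
     Mor := (Mor G * nvec l)%type;
     idm := fun v => (idm G v, nzero l);
     dom := fun p => ao (zneg (zofn p.2)) (dom G p.1);
     cod := fun p => cod G p.1;
     comp := fun p q => (comp G p.1 (am (zofn p.2) q.1), nadd p.2 q.2);
     deg := fun p => ncat (deg G p.1) p.2 |}.

Definition Omega j := {p : (nvec j * nvec j)%type | nle p.1 p.2}.
Definition om j (a b : nvec j) (h : nle a b) : Omega j := exist _ (a, b) h.

Definition is_infpath j (G : rawgraph j) (x : Omega j -> Mor G) : Prop :=
  [/\ (forall a b (h : nle a b), deg G (x (om h)) = nsub b a),
      (forall a (h : nle a a), x (om h) = idm G (cod G (x (om h)))),
      (forall a b (hab : nle a b) (haa : nle a a),
          cod G (x (om hab)) = cod G (x (om haa)))
    & (forall a b c (hab : nle a b) (hbc : nle b c) (hac : nle a c),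
          dom G (x (om hab)) = cod G (x (om hbc))
          /\ x (om hac) = comp G (x (om hab)) (x (om hbc)))].

Definition starts_at j (G : rawgraph j) (v : Ob G) (x : Omega j -> Mor G) : Prop :=
  forall h : nle (nzero j) (nzero j), x (om h) = idm G v.

Lemma nle_shift j (q a b : nvec j) : nle a b -> nle (nadd q a) (nadd q b).
Proof.
move/forallP=> h; apply/forallP=> i; rewrite !ffunE leq_add2l; exact: h.
Qed.

Definition shiftO j (q : nvec j) (p : Omega j) : Omega j :=
  om (nle_shift q (valP p)).

Definition sigma j (T : Type) (q : nvec j) (x : Omega j -> T) : Omega j -> T :=
  fun p => x (shiftO q p).

Definition no_local_periodicity j (G : rawgraph j) : Prop :=
  forall (v : Ob G) (m n : nvec j), m <> n ->
    exists x, [/\ is_infpath x, starts_at v x & sigma m x <> sigma n x].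

Definition alpha_aperiodic k l (G : rawgraph k) (am : zvec l -> Mor G -> Mor G) : Prop :=
  forall (v : Ob G) (p q : nvec k) (m n : nvec l), (p, m) <> (q, n) ->
    exists x, [/\ is_infpath x, starts_at v x &
      sigma p (am (zneg (zofn m)) \o x) <> sigma q (am (zneg (zofn n)) \o x)].

(* Main.v *)
From mathcomp Require Import all_boot all_order all_algebra.
Require Import Defs.
From mathcomp Require Import zify.
From Stdlib Require Import FunctionalExtensionality.
Set Implicit Arguments. Unset Strict Implicit. Unset Printing Implicit Defensive.
Import GRing.Theory.

Definition lsp k l (A : nvec (k + l)) : nvec k := [ffun i => A (lshift l i)].
Definition rsp k l (A : nvec (k + l)) : nvec l := [ffun i => A (rshift k i)].

Lemma split_l k l (i : 'I_k) : split (lshift l i) = inl i.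
Proof. exact: (@unsplitK k l (inl i)). Qed.
Lemma split_r k l (i : 'I_l) : split (rshift k i) = inr i.
Proof. exact: (@unsplitK k l (inr i)). Qed.

Lemma lsp_ncat k l (a : nvec k) (c : nvec l) : lsp (ncat a c) = a.
Proof. by apply/ffunP => i; rewrite !ffunE split_l. Qed.
Lemma rsp_ncat k l (a : nvec k) (c : nvec l) : rsp (ncat a c) = c.
Proof. by apply/ffunP => i; rewrite !ffunE split_r. Qed.
Lemma ncat_sp k l (A : nvec (k + l)) : ncat (lsp A) (rsp A) = A.
Proof. by apply/ffunP => i; rewrite !ffunE; case: split_ordP => j -> ; rewrite ffunE. Qed.

Lemma lsp_nadd k l (A B : nvec (k + l)) : lsp (nadd A B) = nadd (lsp A) (lsp B).
Proof. by apply/ffunP => i; rewrite !ffunE. Qed.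
Lemma rsp_nadd k l (A B : nvec (k + l)) : rsp (nadd A B) = nadd (rsp A) (rsp B).
Proof. by apply/ffunP => i; rewrite !ffunE. Qed.
Lemma nsub_sp k l (A B : nvec (k + l)) :
  nsub B A = ncat (nsub (lsp B) (lsp A)) (nsub (rsp B) (rsp A)).
Proof. by apply/ffunP => i; rewrite !ffunE; case: split_ordP => j -> ; rewrite !ffunE. Qed.
Lemma lsp0 k l : lsp (nzero (k + l)) = nzero k.
Proof. by apply/ffunP => i; rewrite !ffunE. Qed.
Lemma rsp0 k l : rsp (nzero (k + l)) = nzero l.
Proof. by apply/ffunP => i; rewrite !ffunE. Qed.
Lemma ncat0 k l : ncat (nzero k) (nzero l) = nzero (k + l).
Proof. by apply/ffunP => i; rewrite !ffunE; case: split_ordP => j _ ; rewrite !ffunE. Qed.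
Lemma nsubnn k (a : nvec k) : nsub a a = nzero k.
Proof. by apply/ffunP => i; rewrite !ffunE subnn. Qed.
Lemma nadd00 k : nadd (nzero k) (nzero k) = nzero k.
Proof. by apply/ffunP => i; rewrite !ffunE. Qed.

Lemma nleP k (a b : nvec k) : reflect (forall i, a i <= b i) (nle a b).
Proof. exact: forallP. Qed.
Lemma nle_lsp k l (A B : nvec (k + l)) : nle A B -> nle (lsp A) (lsp B).
Proof. by move/nleP=> h; apply/nleP=> i; rewrite !ffunE; apply: h. Qed.
Lemma nle_rsp k l (A B : nvec (k + l)) : nle A B -> nle (rsp A) (rsp B).
Proof. by move/nleP=> h; apply/nleP=> i; rewrite !ffunE; apply: h. Qed.
Lemma nle_ncat k l (a b : nvec k) (c d : nvec l) :
  nle a b -> nle c d -> nle (ncat a c) (ncat b d).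
Proof.
move=> /nleP h1 /nleP h2; apply/nleP=> i; rewrite !ffunE.
by case: split_ordP => j _.
Qed.
Lemma nle0 k (a : nvec k) : nle (nzero k) a.
Proof. by apply/nleP=> i; rewrite ffunE. Qed.
Lemma nlerr k (a : nvec k) : nle a a.
Proof. by apply/nleP=> i. Qed.

Lemma om_eq j (a b a' b' : nvec j) (h : nle a b) (h' : nle a' b') :
  a = a' -> b = b' -> om h = om h'.
Proof. by move=> ea eb; subst; rewrite (bool_irrelevance h h'). Qed.

Lemma shiftO_om j (q a b : nvec j) (h : nle a b) (h' : nle (nadd q a) (nadd q b)) :
  shiftO q (om h) = om h'.
Proof. by rewrite /shiftO; apply: om_eq. Qed.

Lemma zneg0 l : zneg (zofn (nzero l)) = zzero l.
Proof. by apply/ffunP => i; rewrite !ffunE. Qed.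
Lemma zofn0 l : zofn (nzero l) = zzero l.
Proof. by apply/ffunP => i; rewrite !ffunE. Qed.
Lemma zaddrN l (c : zvec l) : zadd c (zneg c) = zzero l.
Proof. by apply/ffunP => i; rewrite !ffunE subrr. Qed.
Lemma zaddNr l (c : zvec l) : zadd (zneg c) c = zzero l.
Proof. by apply/ffunP => i; rewrite !ffunE addNr. Qed.
Lemma zsub1 l (c d : nvec l) : nle c d ->
  zadd (zofn (nsub d c)) (zneg (zofn d)) = zneg (zofn c).
Proof. move/nleP=> h; apply/ffunP => i; rewrite !ffunE; have := h i; lia. Qed.
Lemma zsub2 l (c d : nvec l) : nle c d ->
  zadd (zneg (zofn (nsub d c))) (zneg (zofn c)) = zneg (zofn d).
Proof. move/nleP=> h; apply/ffunP => i; rewrite !ffunE; have := h i; lia. Qed.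
Lemma zneg_nadd l (m c : nvec l) :
  zneg (zofn (nadd m c)) = zadd (zneg (zofn c)) (zneg (zofn m)).
Proof. apply/ffunP => i; rewrite !ffunE; lia. Qed.
Lemma nsub_nadd l (m c d : nvec l) : nsub (nadd m d) (nadd m c) = nsub d c.
Proof. apply/ffunP => i; rewrite !ffunE; lia. Qed.
Lemma nadd_nsub l (c d f : nvec l) : nle c d -> nle d f ->
  nadd (nsub d c) (nsub f d) = nsub f c.
Proof. move=> /nleP h1 /nleP h2; apply/ffunP => i; rewrite !ffunE; have := h1 i; have := h2 i; lia. Qed.

Lemma lnsub0 l (c : nvec l) : nsub c (nzero l) = c.
Proof. by apply/ffunP => i; rewrite !ffunE subn0. Qed.

Lemma am0 k l (G : rawgraph k) ao am : @is_Zaction k l G ao am -> forall f, am (zzero l) f = f.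
Proof. by case. Qed.
Lemma ao0 k l (G : rawgraph k) ao am : @is_Zaction k l G ao am -> forall v, ao (zzero l) v = v.
Proof. by case. Qed.
Lemma amD k l (G : rawgraph k) ao am : @is_Zaction k l G ao am ->
  forall g h f, am (zadd g h) f = am g (am h f).
Proof. by case. Qed.
Lemma aoD k l (G : rawgraph k) ao am : @is_Zaction k l G ao am ->
  forall g h v, ao (zadd g h) v = ao g (ao h v).
Proof. by case. Qed.
Lemma amNK k l (G : rawgraph k) ao am : @is_Zaction k l G ao am ->
  forall c f, am (zneg c) (am c f) = f.
Proof. by move=> HA c f; rewrite -(amD HA) zaddNr (am0 HA). Qed.
Lemma aoKN k l (G : rawgraph k) ao am : @is_Zaction k l G ao am ->
  forall c v, ao c (ao (zneg c) v) = v.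
Proof. by move=> HA c v; rewrite -(aoD HA) zaddrN (ao0 HA). Qed.
Lemma am_dom k l (G : rawgraph k) ao am : @is_Zaction k l G ao am ->
  forall g f, dom G (am g f) = ao g (dom G f).
Proof. by case=> H _ _ _ _ g f; case: (H g) => _ _ H3 _ _; case: (H3 f). Qed.
Lemma am_cod k l (G : rawgraph k) ao am : @is_Zaction k l G ao am ->
  forall g f, cod G (am g f) = ao g (cod G f).
Proof. by case=> H _ _ _ _ g f; case: (H g) => _ _ H3 _ _; case: (H3 f). Qed.
Lemma am_deg k l (G : rawgraph k) ao am : @is_Zaction k l G ao am ->
  forall g f, deg G (am g f) = deg G f.
Proof. by case=> H _ _ _ _ g f; case: (H g) => _ _ H3 _ _; case: (H3 f). Qed.
Lemma am_idm k l (G : rawgraph k) ao am : @is_Zaction k l G ao am ->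
  forall g v, am g (idm G v) = idm G (ao g v).
Proof. by case=> H _ _ _ _ g; case: (H g). Qed.
Lemma am_comp k l (G : rawgraph k) ao am : @is_Zaction k l G ao am ->
  forall g f f', dom G f = cod G f' -> am g (comp G f f') = comp G (am g f) (am g f').
Proof. by case=> H _ _ _ _ g; case: (H g). Qed.

Lemma dom_idm k (G : rawgraph k) : is_kgraph G -> forall v, dom G (idm G v) = v.
Proof. by case=> [[H _] _ _] v; case: (H v). Qed.
Lemma cod_idm k (G : rawgraph k) : is_kgraph G -> forall v, cod G (idm G v) = v.
Proof. by case=> [[H _] _ _] v; case: (H v). Qed.
Lemma comp_idl k (G : rawgraph k) : is_kgraph G -> forall f, comp G (idm G (cod G f)) f = f.
Proof. by case=> [[_ [H _]] _ _] f; case: (H f). Qed.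
Lemma comp_idr k (G : rawgraph k) : is_kgraph G -> forall f, comp G f (idm G (dom G f)) = f.
Proof. by case=> [[_ [H _]] _ _] f; case: (H f). Qed.
Lemma deg_idm k (G : rawgraph k) : is_kgraph G -> forall v, deg G (idm G v) = nzero k.
Proof. by case=> [_ [H _] _]. Qed.
Lemma deg0_idm k (G : rawgraph k) : is_kgraph G ->
  forall f, deg G f = nzero k -> f = idm G (cod G f).
Proof.
move=> HG f df; case: (HG) => _ _ HU.
have e : deg G f = nadd (nzero k) (nzero k) by rewrite nadd00.
case: (HU f _ _ e) => p [_ Hu].
have h1 : p = (f, idm G (dom G f)).
  by apply: Hu; split => /=; rewrite ?cod_idm ?deg_idm ?comp_idr.
have h2 : p = (idm G (cod G f), f).
  by apply: Hu; split => /=; rewrite ?dom_idm ?deg_idm ?comp_idl.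
by have /= := congr1 fst (etrans (esym h1) h2).
Qed.
Lemma sigma_form k l (G : rawgraph k) ao am (HA : @is_Zaction k l G ao am)
  (Y : Omega (k + l) -> Mor (skew_product ao am)) (X : Omega k -> Mor G) :
  (forall A B (h : nle A B) (hab : nle (lsp A) (lsp B)),
      Y (om h) = (am (zneg (zofn (rsp A))) (X (om hab)), nsub (rsp B) (rsp A))) ->
  forall P A B (h : nle A B) a b (hab : nle a b), lsp A = a -> lsp B = b ->
  sigma P Y (om h) = (am (zneg (zofn (rsp A)))
     (sigma (lsp P) (am (zneg (zofn (rsp P))) \o X) (om hab)), nsub (rsp B) (rsp A)).
Proof.
move=> F P A B h a b hab ea eb.
rewrite /sigma (shiftO_om h (nle_shift P h)) (F _ _ _ (nle_lsp (nle_shift P h))).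
rewrite (shiftO_om hab (nle_shift (lsp P) hab)) /=.
rewrite !rsp_nadd nsub_nadd zneg_nadd (amD HA).
congr (_, _); congr (am _ (am _ (X _))); apply: om_eq; rewrite lsp_nadd ?ea ?eb //.
Qed.

Definition xof k l (G : rawgraph k) ao am
  (y : Omega (k + l) -> Mor (@skew_product k l G ao am)) : Omega k -> Mor G :=
  fun p => (y (om (nle_ncat (proj2_sig p) (nlerr (nzero l))))).1.

Lemma xof_om k l (G : rawgraph k) ao am
  (y : Omega (k + l) -> Mor (@skew_product k l G ao am)) a b (hab : nle a b)
  (h : nle (ncat a (nzero l)) (ncat b (nzero l))) : xof y (om hab) = (y (om h)).1.
Proof. by rewrite /xof; congr fst; congr y; apply: om_eq. Qed.

Lemma ydeg k l (G : rawgraph k) ao am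
  (y : Omega (k + l) -> Mor (@skew_product k l G ao am)) :
  is_infpath y -> forall A B (h : nle A B),
  deg G (y (om h)).1 = nsub (lsp B) (lsp A) /\ (y (om h)).2 = nsub (rsp B) (rsp A).
Proof.
case=> Hd _ _ _ A B h; have := Hd A B h; rewrite /= (nsub_sp A B) => e.
by split; [have := congr1 (@lsp k l) e | have := congr1 (@rsp k l) e];
  rewrite ?lsp_ncat ?rsp_ncat.
Qed.

Lemma yform k l (G : rawgraph k) ao am (HG : is_kgraph G) (HA : @is_Zaction k l G ao am)
  (y : Omega (k + l) -> Mor (@skew_product k l G ao am)) :
  is_infpath y -> forall A B (h : nle A B) (hab : nle (lsp A) (lsp B)),
  y (om h) = (am (zneg (zofn (rsp A))) (xof y (om hab)), nsub (rsp B) (rsp A)).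
Proof.
move=> Hy A B h hab.
have hcd := nle_rsp h.
have h43 := nle_ncat hab hcd.
have -> : y (om h) = y (om h43) by congr y; apply: om_eq; rewrite ncat_sp.
have h0c := nle0 (rsp A); have h0d := nle0 (rsp B).
have h12 := nle_ncat hab (nlerr (nzero l)).
have h23 := nle_ncat (nlerr (lsp B)) h0d.
have h13 := nle_ncat hab h0d.
have h14 := nle_ncat (nlerr (lsp A)) h0c.
have [g12 s12] := ydeg Hy h12; have [g23 s23] := ydeg Hy h23.
have [g14 s14] := ydeg Hy h14; have [g43 s43] := ydeg Hy h43.
rewrite !lsp_ncat !rsp_ncat ?nsubnn ?lnsub0 in g12 s12 g23 s23 g14 s14 g43 s43.
case: (Hy) => _ _ _ Hc.
have [dd1 e1] := Hc _ _ _ h12 h23 h13.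
have [dd2 e2] := Hc _ _ _ h14 h43 h13.
have f1 := congr1 fst e1; have f2 := congr1 fst e2.
rewrite /= in f1 f2 dd1 dd2.
rewrite s12 zofn0 (am0 HA) in f1.
rewrite s12 zneg0 (ao0 HA) in dd1.
rewrite (deg0_idm HG g23) -dd1 (comp_idr HG) in f1.
have i14 := deg0_idm HG g14.
rewrite s14 in f2 dd2.
have ec : cod G (am (zofn (rsp A)) (y (om h43)).1) = cod G (y (om h14)).1.
  by rewrite (am_cod HA) -dd2 (aoKN HA) {1}i14 (dom_idm HG).
rewrite i14 -ec (comp_idl HG) f1 -(xof_om y hab h12) in f2.
rewrite f2 (amNK HA) -s43.
by case: (y (om h43)).
Qed.

Lemma xof_inf k l (G : rawgraph k) ao am (HG : is_kgraph G) (HA : @is_Zaction k l G ao am)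
  (y : Omega (k + l) -> Mor (@skew_product k l G ao am)) :
  is_infpath y -> is_infpath (xof y).
Proof.
move=> Hy; case: (Hy) => Hd Hid Hcod Hc; split.
- move=> a b h; rewrite (xof_om y h (nle_ncat h (nlerr _))).
  by have [-> _] := ydeg Hy (nle_ncat h (nlerr (nzero l))); rewrite !lsp_ncat.
- move=> a h; rewrite (xof_om y h (nle_ncat h (nlerr _))).
  by have /= := congr1 fst (Hid _ (nle_ncat h (nlerr (nzero l)))).
- move=> a b hab haa; rewrite (xof_om y hab (nle_ncat hab (nlerr _)))
    (xof_om y haa (nle_ncat haa (nlerr _))).
  exact: Hcod.
- move=> a b c hab hbc hac.
  rewrite (xof_om y hab (nle_ncat hab (nlerr _))) (xof_om y hbc (nle_ncat hbc (nlerr _)))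
    (xof_om y hac (nle_ncat hac (nlerr _))).
  have [_ s] := ydeg Hy (nle_ncat hab (nlerr (nzero l))).
  rewrite !rsp_ncat nsubnn in s.
  have [dd e] := Hc _ _ _ (nle_ncat hab (nlerr (nzero l))) (nle_ncat hbc (nlerr (nzero l)))
    (nle_ncat hac (nlerr (nzero l))).
  rewrite /= s zneg0 (ao0 HA) in dd.
  by split=> //; rewrite e /= s zofn0 (am0 HA).
Qed.

Lemma xof_start k l (G : rawgraph k) ao am (v : Ob G)
  (y : Omega (k + l) -> Mor (@skew_product k l G ao am)) :
  @starts_at _ (skew_product ao am) v y -> starts_at v (xof y).
Proof.
move=> Hs h; rewrite (xof_om y h (nle_ncat h (nlerr _))).
have h0 := nle0 (nzero (k + l)).
by rewrite (om_eq (nle_ncat h (nlerr (nzero l))) h0 (ncat0 _ _) (ncat0 _ _)) Hs.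
Qed.

Lemma bwd k l (G : rawgraph k) ao am (HG : is_kgraph G) (HA : @is_Zaction k l G ao am) :
  no_local_periodicity (skew_product ao am) -> alpha_aperiodic am.
Proof.
move=> Hn v p q m n hne.
have hPQ : ncat p m <> ncat q n.
  move=> e; apply: hne; have := congr1 (@lsp _ _) e; have := congr1 (@rsp _ _) e.
  by rewrite !lsp_ncat !rsp_ncat => -> ->.
have [y [Hy Hs Hne]] := Hn v _ _ hPQ.
exists (xof y); split; [exact: xof_inf | exact: xof_start |].
move=> E; apply: Hne; apply: functional_extensionality => -[[A B] h].
change (sigma (ncat p m) y (om h) = sigma (ncat q n) y (om h)).
rewrite !(sigma_form HA (yform HG HA Hy) _ h (nle_lsp h) erefl erefl) !lsp_ncat !rsp_ncat E.
by [].
Qed.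

Definition yof k l (G : rawgraph k) (ao : zvec l -> Ob G -> Ob G) (am : zvec l -> Mor G -> Mor G)
  (x : Omega k -> Mor G) : Omega (k + l) -> Mor (@skew_product k l G ao am) :=
  fun w => (am (zneg (zofn (rsp (proj1_sig w).1))) (x (om (nle_lsp (proj2_sig w)))),
            nsub (rsp (proj1_sig w).2) (rsp (proj1_sig w).1)).
Arguments yof {k l G} ao am x _.

Lemma yof_om k l (G : rawgraph k) ao am (x : Omega k -> Mor G)
  (A B : nvec (k + l)) (h : nle A B) (hab : nle (lsp A) (lsp B)) :
  yof ao am x (om h) = (am (zneg (zofn (rsp A))) (x (om hab)), nsub (rsp B) (rsp A)).
Proof. by rewrite /yof /=; congr (_, _); congr (am _ (x _)); apply: om_eq. Qed.

Lemma yof_inf k l (G : rawgraph k) ao am (HG : is_kgraph G) (HA : @is_Zaction k l G ao am)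
  (x : Omega k -> Mor G) : is_infpath x -> is_infpath (yof ao am x).
Proof.
case=> Hd Hid Hcod Hc; split.
- move=> A B h; rewrite (yof_om _ _ _ h (nle_lsp h)) /= (am_deg HA) Hd.
  by rewrite (nsub_sp A B).
- move=> A h; rewrite (yof_om _ _ _ h (nle_lsp h)) /=.
  by rewrite {1}(Hid _ (nle_lsp h)) (am_idm HA) (am_cod HA) nsubnn.
- move=> A B hAB hAA; rewrite (yof_om _ _ _ hAB (nle_lsp hAB)) (yof_om _ _ _ hAA (nle_lsp hAA)) /=.
  by rewrite !(am_cod HA) (Hcod _ _ _ (nle_lsp hAA)).
- move=> A B C hab hbc hac.
  rewrite (yof_om _ _ _ hab (nle_lsp hab)) (yof_om _ _ _ hbc (nle_lsp hbc))
    (yof_om _ _ _ hac (nle_lsp hac)) /=.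
  have [dd e] := Hc _ _ _ (nle_lsp hab) (nle_lsp hbc) (nle_lsp hac).
  split.
  + by rewrite (am_dom HA) (am_cod HA) -(aoD HA) (zsub2 (nle_rsp hab)) dd.
  + rewrite -(amD HA) (zsub1 (nle_rsp hab)) -(am_comp HA) // -e.
    by rewrite (nadd_nsub (nle_rsp hab) (nle_rsp hbc)).
Qed.

Lemma yof_start k l (G : rawgraph k) ao am (HA : @is_Zaction k l G ao am) (v : Ob G)
  (x : Omega k -> Mor G) :
  starts_at v x -> @starts_at _ (skew_product ao am) v (yof ao am x).
Proof.
move=> Hs h; rewrite (yof_om _ _ _ h (nle_lsp h)) /=.
rewrite (om_eq (nle_lsp h) (nle0 (nzero k)) (lsp0 k l) (lsp0 k l)) Hs.
by rewrite rsp0 zneg0 (am0 HA) nsubnn.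
Qed.

Lemma fwd k l (G : rawgraph k) ao am (HG : is_kgraph G) (HA : @is_Zaction k l G ao am) :
  alpha_aperiodic am -> no_local_periodicity (skew_product ao am).
Proof.
move=> Hap v P Q hPQ.
have hne : (lsp P, rsp P) <> (lsp Q, rsp Q).
  by case=> e1 e2; apply: hPQ; rewrite -(ncat_sp P) -(ncat_sp Q) e1 e2.
have [x [Hx Hs Hne]] := Hap v _ _ _ _ hne.
exists (yof ao am x); split; [exact: yof_inf | exact: yof_start |].
move=> E; apply: Hne; apply: functional_extensionality => -[[a b]] /= hab.
change ((sigma (lsp P) (am (zneg (zofn (rsp P))) \o x)) (om hab) =
        (sigma (lsp Q) (am (zneg (zofn (rsp Q))) \o x)) (om hab)).
have h := nle_ncat hab (nlerr (nzero l)).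
have := congr1 (fun f : Omega (k + l) -> (Mor G * nvec l)%type => (f (om h)).1) E.
rewrite !(sigma_form HA (@yof_om _ _ _ ao am x) _ h hab (lsp_ncat _ _) (lsp_ncat _ _)) /=.
by rewrite rsp_ncat zneg0 !(am0 HA).
Qed.

Unset Implicit Arguments.
Theorem lemma4p7 (k l : nat) (G : rawgraph k)
    (ao : zvec l -> Ob G -> Ob G) (am : zvec l -> Mor G -> Mor G) :
  is_kgraph G -> row_finite G -> no_sources G -> is_Zaction ao am ->
  (alpha_aperiodic am <-> no_local_periodicity (skew_product ao am)).
Proof.
move=> HG _ _ HA; split; [exact: fwd | exact: bwd].
Qed.
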